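(* Let $n\ge3$ and let $A$ be a set of vertices of $C_n$ with $2\le|A|\le n$. Then the output of $\textsc{Ascending Local Search}(C_n,W,A)$ is a maximizer of $W$ on $C_n$.
   Context: $C_n$ has vertex set $\{0,\dots,n-1\}$ with $i$ adjacent to $i+1\bmod n$. $W(X)=\sum_{\{u,v\}\subseteq X,u\ne v}d(u,v)$ over unordered pairs, $d$ shortest-path distance; $X$ is a maximizer of $W$ if $W(X)=\max\{W(B):|B|=|X|\}$. A perturbation of $X$ in a graph $G$ is $(X\setminus\{u\})\cup\{v\}$ with $u\in X$, $v\in V(G)\setminus X$, $uv\in E(G)$. $\textsc{Ascending Local Search}(G,F,A)$: set $X=A$; list all perturbations of $X$ as $L(0),L(1),\dots$; if $F(L(i))>F(X)$ for some $i$, replace $X$ by $L(j)$ for the least such $j$ and repeat; otherwise return $X$. *)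

(* Defs.v *)
From mathcomp Require Import all_boot.
Set Implicit Arguments. Unset Strict Implicit. Unset Printing Implicit Defensive.

Section Cycle.
Variable n : nat.

Definition cadj : rel 'I_n :=
  fun u v => (nat_of_ord v == (u.+1 %% n)) || (nat_of_ord u == (v.+1 %% n)).

(* Shortest-path distance: the least k < n such that there is a walk of
   length k (a k-tuple of successive vertices) from u to v. *)
Definition walkb (k : nat) (u v : 'I_n) : bool :=
  [exists p : k.-tuple 'I_n, path cadj u p && (last u p == v)].

Definition cdist (u v : 'I_n) : nat := find (fun k => walkb k u v) (iota 0 n).

Definition W (X : {set 'I_n}) : nat :=
  \sum_(u in X) \sum_(v in X | u < v) cdist u v.

Definition is_maximizer (X : {set 'I_n}) : Prop :=
  forall B : {set 'I_n}, #|B| = #|X| -> W B <= W X.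

Definition perturbation (X Y : {set 'I_n}) : Prop :=
  exists u v : 'I_n, [/\ u \in X, v \notin X, cadj u v & Y = v |: (X :\ u)].

Definition valid_listing (lst : {set 'I_n} -> seq {set 'I_n}) : Prop :=
  forall X, uniq (lst X) /\ (forall Y, Y \in lst X <-> perturbation X Y).

(* als lst X Y : running Ascending Local Search (with listing lst) from X
   terminates and returns Y. *)
Inductive als (lst : {set 'I_n} -> seq {set 'I_n}) : {set 'I_n} -> {set 'I_n} -> Prop :=
| als_stop X : (forall Y, Y \in lst X -> W Y <= W X) -> als lst X X
| als_step X j Y :
    j < size (lst X) ->
    W X < W (nth X (lst X) j) ->
    (forall i, i < j -> W (nth X (lst X) i) <= W X) ->
    als lst (nth X (lst X) j) Y -> als lst X Y.

End Cycle.

(* Main.v *)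
Require Import Defs.
From mathcomp Require Import all_boot zify.
Set Implicit Arguments. Unset Strict Implicit. Unset Printing Implicit Defensive.

Section Pf.
Variable n : nat.
Hypothesis n3 : 2 < n.
Let n0 : 0 < n. Proof. by apply: ltn_trans n3. Qed.

Definition D (t w : nat) := (w %% n + n - t %% n) %% n.
Lemma D_lt t w : D t w < n. Proof. exact: ltn_pmod. Qed.
Lemma D_spec t w : (t + D t w) %% n = w %% n.
Proof.
rewrite /D modnDmr -modnDml.
have h1 := ltn_pmod t n0; have h2 := ltn_pmod w n0.
have -> : t %% n + (w %% n + n - t %% n) = w %% n + n by lia.
by rewrite modnDr modn_mod.
Qed.
Lemma D_uniq t w r : r < n -> (t + r) %% n = w %% n -> D t w = r.
Proof.
move=> hr h; have := D_spec t w; rewrite -h => /eqP.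
rewrite eqn_modDl modn_small ?D_lt // modn_small //; by move/eqP.
Qed.
Lemma D_mod t w : D (t %% n) w = D t w.
Proof. by rewrite /D modn_mod. Qed.
Lemma D_modw t w : D t (w %% n) = D t w.
Proof. by rewrite /D modn_mod. Qed.
Lemma D_pert t w : D (t + n) w = D t w.
Proof. by rewrite /D modnDr. Qed.
Lemma D_eq t w j : j < n -> (D t w == j) = (w %% n == (t + j) %% n).
Proof.
move=> hj; apply/eqP/eqP => [<-|h]; first by rewrite D_spec.
exact: D_uniq.
Qed.
Lemma D_self t : D t t = 0.
Proof. by apply: D_uniq; rewrite ?addn0. Qed.
Lemma D_Sw t w : D t w.+1 = (D t w).+1 %% n.
Proof.
apply: D_uniq; first exact: ltn_pmod.
by rewrite modnDmr addnS -addn1 -modnDml D_spec modnDml addn1.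
Qed.
Lemma D_add t w v : (D t w + D w v) %% n = D t v.
Proof.
symmetry; apply: D_uniq; first exact: ltn_pmod.
by rewrite modnDmr addnA -modnDml D_spec modnDml D_spec.
Qed.

Definition o (i : nat) : 'I_n := Ordinal (ltn_pmod i n0).
Lemma oE i : nat_of_ord (o i) = i %% n. Proof. by []. Qed.
Lemma D_o t w : D t (o w) = D t w.
Proof. by rewrite oE D_modw. Qed.
Lemma o_ord (u : 'I_n) : o u = u.
Proof. by apply: val_inj; rewrite /= modn_small. Qed.
Lemma D_eq0 (t : 'I_n) w : (D t w == 0) = (t == o w).
Proof.
rewrite D_eq // addn0 (modn_small (ltn_ord t)).
by apply/eqP/eqP => [h|->]; [apply: val_inj; rewrite /= h|].
Qed.
Lemma D_back s j : j <= n -> D (s + n - j) s = j %% n.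
Proof.
move=> hj; apply: D_uniq; first exact: ltn_pmod.
rewrite modnDmr subnK ?modnDr //; lia.
Qed.
Lemma o_eq (t : 'I_n) s j : j < n -> (t == o (s + n - j)) = (D t s == j).
Proof.
move=> hj; rewrite -D_eq0 -(D_add t (s + n - j) s) D_back ?(ltnW hj) // (modn_small hj).
have := D_lt t (s + n - j); set d := D t _ => hd.
case: (ltnP (d + j) n) => h.
  by rewrite modn_small //; apply/eqP/eqP; lia.
have -> : d + j = (d + j - n) + n by lia.
rewrite modnDr modn_small; last by lia.
apply/eqP/eqP; lia.
Qed.
Lemma modS g : g < n -> g.+1 %% n = (if g.+1 == n then 0 else g.+1).
Proof.
move=> hg; case: eqP => [->|h]; first exact: modnn.
by rewrite modn_small //; lia.
Qed.

Definition dd (u w : nat) := minn (D u w) (n - D u w).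

Lemma dd_step (u : nat) (w y : 'I_n) : cadj w y -> dd u y <= dd u w + 1.
Proof.
rewrite /cadj /dd => /orP [/eqP h | /eqP h].
  rewrite h D_modw D_Sw.
  have := D_lt u w; set g := D u w => hg.
  rewrite modS //; case: eqP => e; lia.
have : D u w = (D u y).+1 %% n by rewrite h D_modw D_Sw.
have := D_lt u y; set g := D u y => hg.
rewrite modS //; case: eqP => e ->; lia.
Qed.

Lemma dd_path (u : nat) (w : 'I_n) (p : seq 'I_n) : path (@cadj n) w p -> dd u (last w p) <= dd u w + size p.
Proof.
elim: p w => [|y p IH] w /=; first by rewrite addn0.
case/andP => hwy hp.
have := IH y hp; have := dd_step u hwy; lia.
Qed.

Lemma dd_self (u : 'I_n) : dd u u = 0.
Proof. by rewrite /dd D_self min0n. Qed.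

Lemma walk_lb (u v : 'I_n) k : walkb k u v -> dd u v <= k.
Proof.
case/existsP => p /andP [hp /eqP hl].
have := dd_path u hp; rewrite hl dd_self size_tuple; lia.
Qed.

Fixpoint fwd (s L : nat) : seq 'I_n :=
  if L is L'.+1 then o s.+1 :: fwd s.+1 L' else [::].
Fixpoint bwd (s L : nat) : seq 'I_n :=
  if L is L'.+1 then o (s + L') :: bwd s L' else [::].

Lemma cadj_S s : cadj (o s) (o s.+1) && cadj (o s.+1) (o s).
Proof.
have e : (s %% n).+1 %% n = s.+1 %% n by rewrite -addn1 modnDml addn1.
by rewrite /cadj !oE e eqxx /= orbT.
Qed.

Lemma fwd_ok s L : [/\ size (fwd s L) = L, path (@cadj n) (o s) (fwd s L) & last (o s) (fwd s L) = o (s + L)].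
Proof.
elim: L s => [|L IH] s /=; first by rewrite addn0.
have [h1 h2 h3] := IH s.+1; rewrite h1 h2 h3 addSnnS.
by case/andP: (cadj_S s) => ->.
Qed.

Lemma bwd_ok s L : [/\ size (bwd s L) = L, path (@cadj n) (o (s + L)) (bwd s L) & last (o (s + L)) (bwd s L) = o s].
Proof.
elim: L => [|L [h1 h2 h3]] /=; first by rewrite addn0.
rewrite h1 h2 h3 addnS.
by case/andP: (cadj_S (s + L)) => _ ->.
Qed.
Lemma walk_of_seq (u v : 'I_n) k (p : seq 'I_n) :
  size p = k -> path (@cadj n) u p -> last u p = v -> walkb k u v.
Proof.
move=> hs hp hl; apply/existsP.
have hs' : size p == k by apply/eqP.
by exists (Tuple hs'); rewrite /= hp hl eqxx.
Qed.

Lemma walk_dd (u v : 'I_n) : walkb (dd u v) u v.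
Proof.
rewrite /dd; have := D_lt u v; set g := D u v => hg.
case: (leqP g (n - g)) => h.
  have [h1 h2 h3] := fwd_ok u g.
  rewrite o_ord in h2 h3; apply: (walk_of_seq h1 h2); rewrite h3.
  by apply: val_inj; rewrite /= D_spec modn_small.
have [h1 h2 h3] := bwd_ok v (n - g).
have e : o (v + (n - g)) = u.
  apply/eqP; rewrite eq_sym addnBA ?(ltnW hg) // o_eq //.
rewrite e in h2 h3; apply: (walk_of_seq h1 h2); rewrite h3 o_ord //.
Qed.

Lemma find_iota (a : pred nat) d : d < n -> a d -> (forall k, k < d -> ~~ a k) ->
  find a (iota 0 n) = d.
Proof.
move=> hd ad hk.
have -> : n = d + (n - d).-1.+1 by lia.
rewrite iotaD find_cat.
have -> : has a (iota 0 d) = false.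
  apply/negbTE/hasPn => k; rewrite mem_iota => /andP [_ h]; exact: hk.
by rewrite size_iota add0n /= ad addn0.
Qed.

Lemma cdistE (u v : 'I_n) : cdist u v = dd u v.
Proof.
apply: find_iota; first by rewrite /dd; have := D_lt u v; lia.
  exact: walk_dd.
by move=> k hk; apply/negP => /walk_lb; lia.
Qed.
Definition m := n./2.
Lemma m_facts : [/\ 0 < m, m + m <= n & n <= m + m + 1].
Proof. rewrite /m; have := odd_double_half n; rewrite -addnn; case: (odd n) => /= h; split; lia. Qed.

Lemma sum_D1 (F : nat -> nat) w : \sum_(t < n) F (D t w) = \sum_(r < n) F r.
Proof.
pose h (t : 'I_n) : 'I_n := Ordinal (D_lt t w).
have hi : injective h.
  move=> t t' /(congr1 val) /= e.
  have := D_spec t w; rewrite e -(D_spec t' w) => /eqP.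
  rewrite eqn_modDr !modn_small // => /eqP; exact: val_inj.
by rewrite [RHS](reindex_inj hi).
Qed.
Lemma sum_D2 (F : nat -> nat) w : \sum_(t < n) F (D w t) = \sum_(r < n) F r.
Proof.
pose h (t : 'I_n) : 'I_n := Ordinal (D_lt w t).
have hi : injective h.
  move=> t t' /(congr1 val) /= e.
  have := D_spec w t; rewrite e D_spec !modn_small // => e'; exact: val_inj.
by rewrite [RHS](reindex_inj hi).
Qed.

Lemma sum_lt N c : \sum_(r < N) (r < c) = minn N c.
Proof.
elim: N => [|N IH]; first by rewrite big_ord0 min0n.
rewrite big_ord_recr /= IH; case: (ltnP N c) => h /=; lia.
Qed.

Lemma modg (r g : nat) : r < n -> g < n -> (r + g) %% n = D (n - g) r.
Proof.
move=> hr hg; symmetry; apply: D_uniq; first exact: ltn_pmod.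
rewrite modnDmr addnA; have -> : n - g + r + g = r + n by lia.
by rewrite modnDr.
Qed.

Lemma count_both g : g < n -> \sum_(r < n) ((r < m) && ((r + g) %% n < m)) = m - minn g (n - g).
Proof.
move=> hg; have [m1 m2 m3] := m_facts.
have -> : \sum_(r < n) ((r < m) && ((r + g) %% n < m)) = \sum_(r < n | r < m) ((r + g) %% n < m).
  by rewrite [RHS]big_mkcond; apply: eq_bigr => r _; case: (r < m).
rewrite -(big_ord_widen n (fun r => ((r + g) %% n < m) : nat)); last by lia.
case: (leqP g (n - g)) => h.
  have -> : \sum_(r < m) ((r + g) %% n < m) = \sum_(r < m) (r < m - g).
    apply: eq_bigr => r _; rewrite modn_small; last by have := ltn_ord r; lia.
    by congr nat_of_bool; apply/idP/idP; lia.
  by rewrite sum_lt; lia.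
have -> : \sum_(r < m) ((r + g) %% n < m) = \sum_(r < m) (1 - (r < n - g)).
  apply: eq_bigr => r _; have hr := ltn_ord r.
  case: (ltnP (r + g) n) => h2.
    rewrite modn_small //; have -> : (r + g < m) = false by apply/negbTE; lia.
    have -> : (r < n - g) = true by apply/idP; lia. by [].
  have -> : r + g = (r + g - n) + n by lia.
  rewrite modnDr modn_small; last by lia.
  have -> : (r + g - n < m) = true by apply/idP; lia.
  have -> : (r < n - g) = false by apply/negbTE; lia. by [].
have e : \sum_(r < m) (1 - (r < n - g)) + \sum_(r < m) (r < n - g) = \sum_(r < m) 1.
  by rewrite -big_split; apply: eq_bigr => r _; case: (r < n - g).
move: e; rewrite sum_lt sum1_card card_ord; lia.
Qed.

Lemma count_sep g : g < n -> \sum_(r < n) ((r < m) != ((r + g) %% n < m)) = 2 * minn g (n - g).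
Proof.
move=> hg; have [m1 m2 m3] := m_facts.
have e : \sum_(r < n) ((r < m) != ((r + g) %% n < m)) + 2 * \sum_(r < n) ((r < m) && ((r + g) %% n < m))
   = \sum_(r < n) (r < m) + \sum_(r < n) ((r + g) %% n < m).
  rewrite big_distrr -!big_split; apply: eq_bigr => r _ /=.
  by case: (r < m); case: (_ < m).
have e2 : \sum_(r < n) ((r + g) %% n < m) = m.
  rewrite (eq_bigr (fun r : 'I_n => ((D (n - g) r < m) : nat))); last by move=> r _; rewrite modg.
  by rewrite (sum_D2 (fun r => (r < m) : nat)) sum_lt; lia.
move: e; rewrite e2 sum_lt count_both //; lia.
Qed.

Lemma two_dd (u v : 'I_n) : 2 * dd u v = \sum_(t < n) ((D t u < m) != (D t v < m)).
Proof.
rewrite (eq_bigr (fun t : 'I_n => (((D t u < m) != ((D t u + D u v) %% n < m)) : nat))); last by move=> t _; rewrite D_add.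
rewrite (sum_D1 (fun r => ((r < m) != ((r + D u v) %% n < m)) : nat)).
by rewrite count_sep // D_lt.
Qed.
Lemma mk2 (X : {set 'I_n}) (P : 'I_n -> 'I_n -> bool) (F : 'I_n -> 'I_n -> nat) :
  \sum_(u in X) \sum_(v in X | P u v) F u v =
  \sum_(u < n) \sum_(v < n) (if [&& u \in X, v \in X & P u v] then F u v else 0).
Proof.
rewrite big_mkcond; apply: eq_bigr => u _; case: (u \in X) => /=.
  by rewrite big_mkcond; apply: eq_bigr => v _.
by rewrite big1.
Qed.

Lemma pair_sum (X : {set 'I_n}) (F : 'I_n -> 'I_n -> nat) :
  (forall u v, F u v = F v u) -> (forall u, F u u = 0) ->
  2 * \sum_(u in X) \sum_(v in X | u < v) F u v = \sum_(u in X) \sum_(v in X) F u v.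
Proof.
move=> Fs F0.
have e1 : \sum_(u in X) \sum_(v in X) F u v =
   \sum_(u in X) \sum_(v in X | u < v) F u v + \sum_(u in X) \sum_(v in X | v < u) F u v.
  rewrite -big_split; apply: eq_bigr => u _ /=.
  rewrite big_mkcond [X in _ = X + _]big_mkcond [X in _ = _ + X]big_mkcond -big_split.
  apply: eq_bigr => v _ /=; case: (v \in X) => //=.
  case: (ltngtP u v) => e /=; rewrite ?addn0 ?add0n // (val_inj e) F0.
  by [].
have e2 : \sum_(u in X) \sum_(v in X | v < u) F u v = \sum_(u in X) \sum_(v in X | u < v) F u v.
  rewrite !mk2 exchange_big; apply: eq_bigr => u _; apply: eq_bigr => v _.
  rewrite Fs; by case: (u \in X); case: (v \in X).
by rewrite e1 e2 mul2n addnn.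
Qed.

Definition a (X : {set 'I_n}) (t : nat) := \sum_(u in X) ((D t u < m) : nat).

Lemma a_le X t : a X t <= #|X|.
Proof. rewrite /a -sum1_card; apply: leq_sum => u _; by case: (_ < m). Qed.

Lemma pair_t (X : {set 'I_n}) (t : nat) :
  \sum_(u in X) \sum_(v in X | u < v) (((D t u < m) != (D t v < m)) : nat) = a X t * (#|X| - a X t).
Proof.
set c := fun u : 'I_n => ((D t u < m) : nat).
have hc : forall u, c u <= 1 by move=> u; rewrite /c; case: (_ < m).
have e0 : \sum_(u in X) (1 - c u) = #|X| - a X t.
  have : \sum_(u in X) (1 - c u) + a X t = #|X|.
    rewrite /a -big_split -sum1_card; apply: eq_bigr => u _; have := hc u; rewrite /c /=; lia.
  lia.
have h := pair_sum X (F := fun u v => (((D t u < m) != (D t v < m)) : nat)).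
have {}h := h (fun u v => ltac:(by case: (D t u < m); case: (D t v < m))) (fun u => ltac:(by case: (D t u < m))).
have e1 : \sum_(u in X) \sum_(v in X) (((D t u < m) != (D t v < m)) : nat)
   = \sum_(u in X) \sum_(v in X) (c u * (1 - c v) + (1 - c u) * c v).
  apply: eq_bigr => u _; apply: eq_bigr => v _; rewrite /c.
  by case: (D t u < m); case: (D t v < m).
have e2 : \sum_(u in X) \sum_(v in X) (c u * (1 - c v) + (1 - c u) * c v) = 2 * (a X t * (#|X| - a X t)).
  rewrite (eq_bigr (fun u => c u * \sum_(v in X) (1 - c v) + (1 - c u) * \sum_(v in X) c v)); last first.
    by move=> u _; rewrite big_split /= -!big_distrr.
  rewrite big_split /= -!big_distrl e0 -/(a X t).
  have e3 : \sum_(i in X) (1 - c i) * a X t = (#|X| - a X t) * a X t by rewrite -big_distrl e0.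
  change ((a X t * (#|X| - a X t)) + ((#|X| - a X t) * a X t) = 2 * (a X t * (#|X| - a X t))); lia.
move: h; rewrite e1 e2 => /eqP; rewrite eqn_pmul2l // => /eqP hh; exact: hh.
Qed.
Lemma W2 (X : {set 'I_n}) : 2 * W X = \sum_(t < n) a X t * (#|X| - a X t).
Proof.
rewrite /W big_distrr /=.
rewrite (eq_bigr (fun u : 'I_n => \sum_(v in X | u < v) \sum_(t < n) (((D t u < m) != (D t v < m)) : nat))); last first.
  move=> u _; rewrite big_distrr /=; apply: eq_bigr => v _.
  by rewrite cdistE two_dd.
rewrite (eq_bigr (fun u : 'I_n => \sum_(t < n) \sum_(v in X | u < v) (((D t u < m) != (D t v < m)) : nat))); last first.
  by move=> u _; rewrite exchange_big.
rewrite exchange_big /=; apply: eq_bigr => t _; exact: pair_t.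
Qed.

Lemma sum_a (X : {set 'I_n}) : \sum_(t < n) a X t = m * #|X|.
Proof.
rewrite /a exchange_big /= -sum1_card big_distrr /=; apply: eq_bigr => u _.
have [m1 m2 m3] := m_facts.
rewrite (sum_D1 (fun r => (r < m) : nat)) sum_lt muln1; lia.
Qed.
Lemma a_mod X t : a X (t %% n) = a X t.
Proof. by rewrite /a; apply: eq_bigr => u _; rewrite D_mod. Qed.
Lemma a_per X t : a X (t + n) = a X t.
Proof. by rewrite /a; apply: eq_bigr => u _; rewrite D_pert. Qed.
Lemma a_o X t : a X (o t) = a X t.
Proof. by rewrite oE a_mod. Qed.

Lemma arith1 r : r < n ->
  (r.+1 %% n < m) + (r.+1 %% n == m) = (r < m) + (r.+1 %% n == 0) :> nat.
Proof.
move=> hr; have [m1 m2 m3] := m_facts; rewrite modS //.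
case: eqP => e.
  have -> : (r < m) = false by apply/negbTE; lia.
  have -> : (0 < m) = true by []. have -> : (0 == m) = false by apply/negbTE; lia. by [].
have -> : (r.+1 == 0) = false by [].
by case: (ltngtP r.+1 m) => h //=.
Qed.

Lemma sum_eq (X : {set 'I_n}) w : \sum_(u in X) ((u == w) : nat) = (w \in X).
Proof.
case: (boolP (w \in X)) => h.
  rewrite (bigD1 w) //= eqxx big1 // => u /andP [_ /negbTE ->]; by [].
by rewrite big1 // => u hu; case: eqP => // e; rewrite -e hu in h.
Qed.

Definition x (X : {set 'I_n}) (i : nat) := o i \in X.

Lemma a_rec X t : a X t.+1 + x X t = a X t + x X (t + m).
Proof.
have [m1 m2 m3] := m_facts.
rewrite /x -!sum_eq /a -!big_split /=; apply: eq_bigr => u _.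
have e1 : (u == o t) = (D t u == 0).
  rewrite D_eq // addn0 modn_small //; apply/eqP/eqP => [->|e] //; exact: val_inj.
have e2 : (u == o (t + m)) = (D t u == m).
  rewrite D_eq; last by lia. rewrite modn_small //; apply/eqP/eqP => [->|e] //; exact: val_inj.
have e3 : D t u = (D t.+1 u).+1 %% n.
  rewrite -(D_add t t.+1 u).
  have -> : D t t.+1 = 1 by apply: D_uniq; [lia | by rewrite addn1].
  by rewrite add1n.
rewrite e1 e2 e3; have := arith1 (D_lt t.+1 u); lia.
Qed.

Lemma sum_swap (X : {set 'I_n}) (F : 'I_n -> nat) u v : u \in X -> v \notin X ->
  \sum_(w in v |: (X :\ u)) F w + F u = \sum_(w in X) F w + F v.
Proof.
move=> hu hv.
rewrite (bigD1 v) ?setU11 //= (bigD1 u hu) /=.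
have -> : \sum_(i in v |: (X :\ u) | i != v) F i = \sum_(i in X | i != u) F i.
  apply: eq_bigl => w; rewrite !inE.
  case: (eqVneq w v) => [->|_] /=; first by rewrite (negbTE hv).
  by rewrite andbT andbC.
set S := \sum_(i in X | i != u) F i.
change (F v + S + F u = F u + S + F v); lia.
Qed.

Lemma sum_move (A B : 'I_n -> nat) (f : nat -> nat) p q : p != q ->
  (forall t, B t + (t == p) = A t + (t == q)) ->
  \sum_(t < n) f (B t) + f (A p) + f (A q) = \sum_(t < n) f (A t) + f (B p) + f (B q).
Proof.
move=> pq h.
rewrite (bigD1 p) // (bigD1 q) /=; last by rewrite eq_sym.
rewrite [\sum_(t < n) f (A t)](bigD1 p) // (bigD1 q) /=; last by rewrite eq_sym.
have -> : \sum_(i < n | (i != p) && (i != q)) f (B i) = \sum_(i < n | (i != p) && (i != q)) f (A i).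
  apply: eq_bigr => t /andP [/negbTE h1 /negbTE h2]; have := h t; rewrite h1 h2 !addn0 => ->; by [].
move: (\sum_(i < n | (i != p) && (i != q)) f (A i)) => S; lia.
Qed.

Lemma PI (t : 'I_n) s : (D t s.+1 < m) + (t == o (s.+1 + n - m)) = (D t s < m) + (t == o s.+1) :> nat.
Proof.
have [m1 m2 m3] := m_facts.
rewrite o_eq; last by lia.
rewrite -D_eq0 D_Sw; exact: arith1 (D_lt t s).
Qed.

Lemma cardY (X : {set 'I_n}) u v : u \in X -> v \notin X -> #|v |: (X :\ u)| = #|X|.
Proof.
move=> hu hv; rewrite cardsU1 !inE (negbTE hv) andbF /= (cardsD1 u X) hu.
by rewrite add1n.
Qed.
Lemma nia1 (k P Q BP BQ Wx Wy S: nat) : BP + 1 = P -> BQ = Q + 1 -> BQ <= k -> P <= k -> Wy <= Wx ->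
  S + P * (k - P) + Q * (k - Q) = Wx + BP * (k - BP) + BQ * (k - BQ) ->
  S = Wy -> P <= Q + 1.
Proof. move=> *; subst; nia. Qed.

Lemma pq_neq s : o s.+1 != o (s.+1 + n - m).
Proof.
have [m1 m2 m3] := m_facts.
rewrite o_eq; last by lia.
by rewrite oE D_mod D_self eq_sym -lt0n.
Qed.

Lemma move_left (X : {set 'I_n}) s : o s.+1 \in X -> o s \notin X ->
  W (o s |: (X :\ o s.+1)) <= W X -> a X s.+1 <= a X (s.+1 + n - m) + 1.
Proof.
move=> hu hv hW.
set Y := o s |: (X :\ o s.+1).
have hk : #|Y| = #|X| by exact: cardY.
have hY : forall t : 'I_n, a Y t + (t == o s.+1) = a X t + (t == o (s.+1 + n - m)).
  move=> t; have h1 := sum_swap (fun w => ((D t w < m) : nat)) hu hv.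
  rewrite /= !D_o in h1; have h2 := PI t s.
  have e1 : a Y t + (D t s.+1 < m) = a X t + (D t s < m) by exact: h1.
  lia.
have hs := sum_move (A := fun t : 'I_n => a X t) (B := fun t : 'I_n => a Y t)
   (fun z => z * (#|X| - z)) (pq_neq s) hY.
have W2X := W2 X; have W2Y := W2 Y; rewrite hk in W2Y.
have hp := hY (o s.+1); rewrite eqxx (negbTE (pq_neq s)) in hp.
have hq := hY (o (s.+1 + n - m)); rewrite eqxx eq_sym (negbTE (pq_neq s)) in hq.
rewrite -a_o -[a X (s.+1 + n - m)]a_o.
apply: (nia1 (BP := a Y (o s.+1)) (BQ := a Y (o (s.+1 + n - m))) (Wx := 2 * W X) (Wy := 2 * W Y)
  (S := \sum_(t < n) a Y t * (#|X| - a Y t))).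
- rewrite /nat_of_bool in hp; lia.
- rewrite /nat_of_bool in hq; lia.
- exact: (leq_trans (a_le Y _) (eq_leq hk)).
- exact: a_le.
- by rewrite leq_mul2l.
- rewrite W2X; exact: hs.
- by rewrite W2Y.
Qed.

Lemma move_right (X : {set 'I_n}) s : o s \in X -> o s.+1 \notin X ->
  W (o s.+1 |: (X :\ o s)) <= W X -> a X (s.+1 + n - m) <= a X s.+1 + 1.
Proof.
move=> hu hv hW.
set Y := o s.+1 |: (X :\ o s).
have hk : #|Y| = #|X| by exact: cardY.
have pq : o (s.+1 + n - m) != o s.+1 by rewrite eq_sym pq_neq.
have hY : forall t : 'I_n, a Y t + (t == o (s.+1 + n - m)) = a X t + (t == o s.+1).
  move=> t; have h1 := sum_swap (fun w => ((D t w < m) : nat)) hu hv.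
  rewrite /= !D_o in h1; have h2 := PI t s.
  have e1 : a Y t + (D t s < m) = a X t + (D t s.+1 < m) by exact: h1.
  lia.
have hs := sum_move (A := fun t : 'I_n => a X t) (B := fun t : 'I_n => a Y t)
   (fun z => z * (#|X| - z)) pq hY.
have W2X := W2 X; have W2Y := W2 Y; rewrite hk in W2Y.
have hp := hY (o (s.+1 + n - m)); rewrite eqxx (negbTE pq) in hp.
have hq := hY (o s.+1); rewrite eqxx eq_sym (negbTE pq) in hq.
rewrite -[a X s.+1]a_o -[a X (s.+1 + n - m)]a_o.
apply: (nia1 (BP := a Y (o (s.+1 + n - m))) (BQ := a Y (o s.+1)) (Wx := 2 * W X) (Wy := 2 * W Y)
  (S := \sum_(t < n) a Y t * (#|X| - a Y t))).
- rewrite /nat_of_bool in hp; lia.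
- rewrite /nat_of_bool in hq; lia.
- exact: (leq_trans (a_le Y _) (eq_leq hk)).
- exact: a_le.
- by rewrite leq_mul2l.
- rewrite W2X; exact: hs.
- by rewrite W2Y.
Qed.
Lemma Dtm t u : D t u = (m + D (t + m) u) %% n.
Proof.
have [m1 m2 m3] := m_facts.
rewrite -(D_add t (t + m) u); congr (_ %% n); congr (_ + _).
apply: D_uniq; first lia. by [].
Qed.

Lemma a_disj (X : {set 'I_n}) t : a X t + a X (t + m) <= #|X|.
Proof.
have [m1 m2 m3] := m_facts.
rewrite /a -big_split -sum1_card; apply: leq_sum => u _ /=.
rewrite Dtm; have := D_lt (t + m) u; set r := D (t + m) u => hr.
case: (ltnP r m) => h; last by case: (_ < m).
rewrite modn_small; last by lia.
have -> : (m + r < m) = false by apply/negbTE; lia. by [].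
Qed.

Lemma a_cover (X : {set 'I_n}) t : #|X| <= a X t + a X (t + m) + 1.
Proof.
have [m1 m2 m3] := m_facts.
have h : #|X| <= a X t + a X (t + m) + \sum_(u in X) ((u == o (t + m + m)) : nat).
  rewrite /a -!big_split -sum1_card; apply: leq_sum => u _ /=.
  have e : (u == o (t + m + m)) = (D (t + m) u == m).
    rewrite D_eq; last by lia. rewrite (modn_small (ltn_ord u)). by [].
  rewrite e Dtm; have := D_lt (t + m) u; set r := D (t + m) u => hr.
  case: (ltnP (m + r) n) => h.
    rewrite modn_small //; case: (ltnP r m) => h2 /=; first by case: (_ < m).
    have -> : (m + r < m) = false by apply/negbTE; lia.
    have -> : r == m by apply/eqP; lia. by [].
  have -> : m + r = (m + r - n) + n by lia.
  rewrite modnDr modn_small; last by lia.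
  have -> : (m + r - n < m) = true by apply/idP; lia. by [].
rewrite sum_eq in h.
by apply: (leq_trans h); rewrite leq_add2l; case: (_ \in X).
Qed.
Lemma propagate (P : nat -> bool) (xb : nat -> bool) (b : bool) :
  (forall t, P (t + n) = P t) ->
  (forall t, P t.+1 -> ~~ P t -> xb t = b) ->
  (forall t, P t.+1 -> xb t = b -> xb t.+1 = b /\ P t.+2) ->
  forall q, P q -> forall s, P s.
Proof.
move=> Pp Hentry Hstep q Pq s; apply/negPn/negP => nPs.
have Pper : forall t c, P (t + c * n) = P t.
  move=> t; elim=> [|c IH]; first by rewrite mul0n addn0.
  by rewrite mulSn addnCA addnC Pp IH.
have ex : exists j, P (s + j).
  exists (q + s * n - s); have -> : s + (q + s * n - s) = q + s * n by nia.
  by rewrite Pper.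
case: (ex_minnP ex) => j Pj jmin.
case: j Pj jmin => [|j'] Pj jmin; first by rewrite addn0 (negbTE nPs) in Pj.
have e0 : xb (s + j') = b by apply: Hentry; [by rewrite -addnS | apply/negP => h; have := jmin _ h; lia].
have claim : forall i, P (s + j'.+1 + i) /\ xb (s + j' + i) = b.
  elim=> [|i [IH1 IH2]]; first by rewrite !addn0; split.
  have h1' : P (s + j' + i).+1 by have -> : (s + j' + i).+1 = s + j'.+1 + i by lia.
  have [h1 h2] := Hstep _ h1' IH2.
  have -> : s + j'.+1 + i.+1 = (s + j' + i).+2 by lia.
  have -> : s + j' + i.+1 = (s + j' + i).+1 by lia.
  by split.
have [c1 _] := claim (j'.+1 * n - j'.+1).
move: c1; have -> : s + j'.+1 + (j'.+1 * n - j'.+1) = s + j'.+1 * n by nia.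
by rewrite Pper (negbTE nPs).
Qed.
Lemma half_b z : z./2 + z./2 <= z <= z./2 + z./2 + 1.
Proof. have := odd_double_half z; rewrite -addnn; case: (odd z) => /= h; apply/andP; split; lia. Qed.

Lemma t2 (k lo b c : nat) : lo + lo + 1 <= k -> c = k - lo - lo - 1 -> b <= k ->
  b * (k - b) + lo * c <= lo * (k - lo) + b * c.
Proof. move=> h hc hb; subst c.
have [h1|h1] := leqP lo b.
- have -> : b = lo + (b - lo) by lia. set d := b - lo. nia.
- nia.
Qed.
Lemma t3 (k lo a c : nat) : lo + lo + 1 <= k -> c = k - lo - lo - 1 -> lo <= a <= lo + 1 ->
  a * (k - a) + lo * c = lo * (k - lo) + a * c.
Proof. move=> h hc /andP [h1 h2]; subst c.
have [->|e] : a = lo \/ a = lo + 1 by lia. by [].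
subst a. nia.
Qed.

Lemma sum_const_n c : \sum_(t < n) c = n * c.
Proof. by rewrite sum_nat_const card_ord. Qed.

Lemma local_max (X : {set 'I_n}) : (forall Y, perturbation X Y -> W Y <= W X) -> is_maximizer X.
Proof.
move=> Hloc.
have [m1 m2 m3] := m_facts.
set k := #|X|.
have hkn : k <= n by have := max_card (mem X); rewrite card_ord.
have Hl : forall s, o s.+1 \in X -> o s \notin X -> a X s.+1 <= a X (s.+1 + n - m) + 1.
  move=> s hu hv; apply: move_left => //; apply: Hloc.
  exists (o s.+1), (o s); split => //; by case/andP: (cadj_S s).
have Hr : forall s, o s \in X -> o s.+1 \notin X -> a X (s.+1 + n - m) <= a X s.+1 + 1.
  move=> s hu hv; apply: move_right => //; apply: Hloc.
  exists (o s), (o s.+1); split => //; by case/andP: (cadj_S s).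
have hd : forall t, a X (t.+1 + n - m) + a X t.+1 <= k.
  move=> t; have := a_disj X (t.+1 + n - m).
  have -> : t.+1 + n - m + m = t.+1 + n by lia.
  by rewrite a_per.
have hc : forall t, k <= a X (t.+1 + n - m) + a X t.+1 + 1.
  move=> t; have := a_cover X (t.+1 + n - m).
  have -> : t.+1 + n - m + m = t.+1 + n by lia.
  by rewrite a_per.
have hsum := sum_a X.
set hi := k.+1./2; set lo := k.-1./2.
have hhi := half_b k.+1; have hlo := half_b k.-1.
have up : forall t, a X t <= hi.
  move=> t; apply/negP => /negP; rewrite -ltnNge => ht.
  have en : forall s, hi < a X s.+1 -> ~~ (hi < a X s) -> x X s = false.
    move=> s h1 h2; have := a_rec X s; case: (x X s); case: (x X (s + m)) => //=; lia.
  have st : forall s, hi < a X s.+1 -> x X s = false -> x X s.+1 = false /\ hi < a X s.+2.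
    move=> s h1 h2; have e : x X s.+1 = false.
      apply/negP => h3; have hv : o s \notin X by move: h2; rewrite /x => ->.
      have := Hl s h3 hv.
      have := hd s; lia.
    split => //; have := a_rec X s.+1; rewrite e; case: (x X (s.+1 + m)) => /=; lia.
  have all := propagate (P := fun t => hi < a X t) (xb := x X) (b := false)
    (fun t => ltac:(by rewrite /= a_per)) en st ht.
  have : \sum_(t < n) hi.+1 <= \sum_(t < n) a X t by apply: leq_sum => i _; exact: all.
  rewrite sum_const_n hsum; nia.
have dn : forall t, lo <= a X t.
  move=> t; apply/negP => /negP; rewrite -ltnNge => ht.
  have en : forall s, a X s.+1 < lo -> ~~ (a X s < lo) -> x X s = true.
    move=> s h1 h2; have := a_rec X s; case: (x X s); case: (x X (s + m)) => //=; lia.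
  have st : forall s, a X s.+1 < lo -> x X s = true -> x X s.+1 = true /\ a X s.+2 < lo.
    move=> s h1 h2; have e : x X s.+1 = true.
      apply/negPn/negP => h3; have := Hr s h2 h3.
      have := hc s; lia.
    split => //; have := a_rec X s.+1; rewrite e; case: (x X (s.+1 + m)) => /=; lia.
  have all := propagate (P := fun t => a X t < lo) (xb := x X) (b := true)
    (fun t => ltac:(by rewrite /= a_per)) en st ht.
  have : \sum_(t < n) (a X t + 1) <= \sum_(t < n) lo by apply: leq_sum => i _; rewrite addn1; exact: all.
  rewrite sum_const_n big_split /= sum_const_n hsum; nia.
move=> B hB.
case: (posnP k) => hk0.
  by rewrite (cards0_eq (etrans hB hk0)) /W big_set0.
have hlohi : hi = lo + 1 by lia.
set c := k - lo - lo - 1.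
have h1 : \sum_(t < n) (a B t * (k - a B t) + lo * c) <= \sum_(t < n) (lo * (k - lo) + a B t * c).
  apply: leq_sum => t _; apply: t2 => //; first lia.
  by move: (a_le B t); rewrite hB.
have h2 : \sum_(t < n) (a X t * (k - a X t) + lo * c) = \sum_(t < n) (lo * (k - lo) + a X t * c).
  apply: eq_bigr => t _; apply: t3 => //; first lia.
  by rewrite dn /= -hlohi up.
rewrite !big_split /= -!big_distrl !sum_const_n sum_a hB -/k in h1.
rewrite !big_split /= -!big_distrl !sum_const_n sum_a -/k in h2.
have := W2 B; have := W2 X; rewrite hB -/k.
move: h1 h2; rewrite /=; move: (\sum_(i < n) a B i * (k - a B i)) (\sum_(i < n) a X i * (k - a X i)) => SB SX.
lia.
Qed.
End Pf.

Lemma W_bound n (X : {set 'I_n}) : W X <= n * (n * n).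
Proof.
have hc : forall (u v : 'I_n), cdist u v <= n.
  move=> u v; rewrite /cdist; have := find_size (fun k => walkb k u v) (iota 0 n); by rewrite size_iota.
have h : forall u : 'I_n, \sum_(v in X | u < v) cdist u v <= n * n.
  move=> u; apply: (@leq_trans (\sum_(v in X | u < v) n)); first by apply: leq_sum => v _; exact: hc.
  rewrite sum_nat_const; apply: leq_mul => //.
  by have := max_card (mem [pred v | (v \in X) && (u < v)]); rewrite card_ord.
apply: (@leq_trans (\sum_(u in X) (n * n))); first by apply: leq_sum => u _; exact: h.
by rewrite sum_nat_const; apply: leq_mul => //; have := max_card (mem X); rewrite card_ord.
Qed.

Lemma als_exists n (lst : {set 'I_n} -> seq {set 'I_n}) :
  valid_listing lst -> forall X, exists Y, als lst X Y.
Proof.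
move=> hv X.
have : n * (n * n) - W X <= n * (n * n) - W X by [].
move: {2}(n * (n * n) - W X) => d; elim: d X => [|d IH] X hd.
  exists X; apply: als_stop => Y hY; rewrite leqNgt; apply/negP => h.
  have := W_bound Y; lia.
case: (boolP (has (fun Y => W X < W Y) (lst X))) => hh.
  set j := find (fun Y => W X < W Y) (lst X).
  have hj : j < size (lst X) by rewrite -has_find.
  have h1 : W X < W (nth X (lst X) j) := nth_find X hh.
  have [Y hY] := IH (nth X (lst X) j) ltac:(have := W_bound (nth X (lst X) j); lia).
  exists Y; apply: (als_step hj h1) => // i hi.
  have := before_find X hi; rewrite -/j => /negbT; rewrite -leqNgt; by [].
exists X; apply: als_stop => Y hY; move/hasPn: hh => /(_ Y hY); by rewrite -leqNgt.
Qed.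

Theorem mainTheorem14 (n : nat) (A : {set 'I_n})
    (lst : {set 'I_n} -> seq {set 'I_n}) :
  3 <= n -> 2 <= #|A| <= n -> valid_listing lst ->
  (exists Y, als lst A Y) /\ (forall Y, als lst A Y -> is_maximizer Y).
Proof.
move=> n3 _ hv; split; first exact: als_exists.
move=> Y0; elim => [X HX | X j Z _ _ _ _ IH] //; clear Y0.
apply: (local_max n3) => Y hp; apply: HX.
by have [_ ->] := hv X.
Qed.
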